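(* Let $f$ be a non-imposing ABC voting rule that satisfies anonymity, neutrality, and consistency. Then there is a function $\hat g:\mathbb Q^{|\mathcal A|}\to 2^{\mathcal W_k}\setminus\{\emptyset\}$ that is neutral (i.e., $\hat g(\tau(v))=\{\tau(W):W\in\hat g(v)\}$ for all $v\in\mathbb Q^{|\mathcal A|}$ and all permutations $\tau$ of $\mathcal C$), consistent (i.e., $\hat g(v+v')=\hat g(v)\cap\hat g(v')$ for all $v,v'\in\mathbb Q^{|\mathcal A|}$ with $\hat g(v)\cap\hat g(v')\neq\emptyset$), and satisfies $\hat g(v(A))=f(A)$ for all profiles $A\in\mathcal A^*$.
   Context: Let $\mathcal C=\{c_1,\dots,c_m\}$ be a set of $m\ge 2$ candidates and $\mathbb N=\{1,2,\dots\}$ the set of potential voters. An approval ballot is a non-empty subset of $\mathcal C$; $\mathcal A$ is the set of all ballots. A profile is a map $A:N_A\to\mathcal A$ for a non-empty finite electorate $N_A\subseteq\mathbb N$; $\mathcal A^*$ is the set of all profiles; for disjoint electorates, $A+A'$ denotes the union profile. Fix $k\in\{1,\dots,m-1\}$; $\mathcal W_k$ is the set of $k$-element subsets of $\mathcal C$. An ABC voting rule is a map $f:\mathcal A^*\to 2^{\mathcal W_k}\setminus\{\emptyset\}$. Anonymity: $f(A)$ is invariant under renaming voters. Neutrality: $f(\tau(A))=\{\tau(W):W\in f(A)\}$ for every permutation $\tau$ of $\mathcal C$, where $\tau(A)_i=\tau(A_i)$. Consistency: $f(A+A')=f(A)\cap f(A')$ for disjoint $A,A'$ with $f(A)\cap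 f(A')\neq\emptyset$. $f$ is non-imposing if for every $W\in\mathcal W_k$ there is a profile $A$ with $f(A)=\{W\}$. Fix a bijection $B:\{1,\dots,|\mathcal A|\}\to\mathcal A$. For a profile $A$, $v(A)\in\mathbb N_0^{|\mathcal A|}$ is the vector whose $\ell$-th entry is the number of voters in $A$ with ballot $B(\ell)$. For a permutation $\tau$ of $\mathcal C$ and a vector $v$ (real entries allowed), $\tau(v)$ is defined by $\tau(v)_{\ell_1}=v_{\ell_2}$ whenever $B(\ell_1)=\tau(B(\ell_2))$. *)

(* Defs.v *)
From HB Require Import structures.
From mathcomp Require Import all_boot all_order all_algebra all_fingroup.
From mathcomp Require Import finmap.
Set Implicit Arguments. Unset Strict Implicit. Unset Printing Implicit Defensive.
Import Order.TTheory GRing.Theory Num.Theory.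
Local Open Scope fset_scope.
Local Open Scope fmap_scope.

Definition ballot (m : nat) := {B : {set 'I_m} | B != set0}.

Lemma imset_perm_neq0 m (t : {perm 'I_m}) (B : {set 'I_m}) :
  B != set0 -> t @: B != set0.
Proof. by rewrite -!card_gt0 card_imset //; apply: perm_inj. Qed.

Definition bperm m (t : {perm 'I_m}) (B : ballot m) : ballot m :=
  exist _ (t @: val B) (imset_perm_neq0 t (valP B)).

(* A profile: a finite map from a non-empty finite electorate N_A of
   positive naturals (N = {1,2,...}) to ballots. *)
Definition valid_profile m (M : {fmap nat -> ballot m}) : bool :=
  (domf M != fset0) && (0 \notin domf M).

Record profile (m : nat) := Profile {
  pmap : {fmap nat -> ballot m};
  pmap_valid : valid_profile pmap }.

Definition is_committee m (k : nat) (W : {set 'I_m}) := #|W| = k.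

Definition abc_rule_out m k (X : {set {set 'I_m}}) :=
  X != set0 /\ forall W, W \in X -> is_committee k W.

Definition is_ABC_rule m k (f : profile m -> {set {set 'I_m}}) :=
  forall A, abc_rule_out k (f A).

(* Anonymity: f is invariant under renaming voters, i.e. if A' is obtained
   from A through a bijection pi : N_A' -> N_A (A'_i = A_(pi i)). *)
Definition anonymous m (f : profile m -> {set {set 'I_m}}) :=
  forall (A A' : profile m) (pi : nat -> nat),
    {in domf (pmap A') &, injective pi} ->
    (forall i, i \in domf (pmap A') -> pi i \in domf (pmap A)) ->
    (forall j, j \in domf (pmap A) -> exists2 i, i \in domf (pmap A') & pi i = j) ->
    (forall i, i \in domf (pmap A') -> (pmap A').[? i] = (pmap A).[? pi i]) ->
    f A' = f A.

Definition is_perm_profile m (t : {perm 'I_m}) (A tA : profile m) :=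
  domf (pmap tA) = domf (pmap A) /\
  forall i, (pmap tA).[? i] = omap (bperm t) (pmap A).[? i].

Definition neutral m (f : profile m -> {set {set 'I_m}}) :=
  forall (t : {perm 'I_m}) (A tA : profile m),
    is_perm_profile t A tA -> f tA = ([set t @: W | W : {set 'I_m} in f A])%SET.

Definition is_union_profile m (A A' U : profile m) :=
  [disjoint domf (pmap A) & domf (pmap A')]%fset /\
  pmap U = catf (pmap A) (pmap A').

Definition consistent m (f : profile m -> {set {set 'I_m}}) :=
  forall A A' U : profile m, is_union_profile A A' U ->
    f A :&: f A' != set0 -> f U = f A :&: f A'.

Definition non_imposing m k (f : profile m -> {set {set 'I_m}}) :=
  forall W : {set 'I_m}, is_committee k W -> exists A : profile m, f A = [set W].

(* Vectors in Q^{|A|}, indexed directly by ballots (the bijection B is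
   taken to be the identity indexing). *)
Definition qvec m := {ffun ballot m -> rat}.

Definition count_vec m (A : profile m) : qvec m :=
  [ffun B => ((count (fun i => (pmap A).[? i] == Some B) (domf (pmap A)))%:R)%R].

(* tau(v)_{tau(B)} = v_B, i.e. tau(v)_B = v_{tau^-1(B)} *)
Definition vperm m (t : {perm 'I_m}) (v : qvec m) : qvec m :=
  [ffun B => v (bperm t^-1 B)].

Definition vadd m (v v' : qvec m) : qvec m := [ffun B => (v B + v' B)%R].

(* Main.v *)
Require Import Defs.
From HB Require Import structures.
From mathcomp Require Import all_boot all_order all_algebra all_fingroup.
From mathcomp Require Import finmap.
From mathcomp Require Import zify ring lra.
From Stdlib Require Import ClassicalEpsilon.

Module Aux.
Set Implicit Arguments. Unset Strict Implicit. Unset Printing Implicit Defensive.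
Import Order.TTheory GRing.Theory Num.Theory.
Local Open Scope fset_scope.
Local Open Scope fmap_scope.


Section Mk.
Variable T : Type.

Fixpoint mkmap (N : nat) (s : seq T) : {fmap nat -> T} :=
  match s with [::] => [fmap] | b :: s' => (mkmap N.+1 s').[N.+1 <- b] end.

Lemma mkmap_fnd N s i :
  (mkmap N s).[? i] = if N < i then nth None (map Some s) (i - N.+1) else None.
Proof.
elim: s N => [|b s IH] N /=.
  by rewrite fnd_fmap0; case: ifP => // _; rewrite nth_nil.
rewrite fnd_set IH; case: eqP => [->|ne].
  by rewrite ltnSn subnn.
case: (ltnP N.+1 i) => h.
  rewrite ltnW //; have -> : i - N.+1 = (i - N.+2).+1 by lia. by [].
by have -> : (N < i) = false by apply/negbTE; rewrite -leqNgt; lia.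
Qed.

Lemma nthSome_size (s : seq T) j : isSome (nth None (map Some s) j) = (j < size s).
Proof. by elim: s j => [|b s IH] [|j] //=. Qed.

Lemma mkmap_dom N s i :
  (i \in domf (mkmap N s)) = (N < i) && (i - N.+1 < size s).
Proof.
rewrite -fndSome mkmap_fnd; case: ifP => //= _.
by rewrite nthSome_size.
Qed.

Lemma count_fsetE (D : {fset nat}) (s : seq nat) (P : pred nat) :
  uniq s -> D =i s -> count P D = count P s.
Proof.
move=> us eq; have /seq.permP h := uniq_perm (fset_uniq D) us eq; exact: h.
Qed.
End Mk.

Section Mk2.
Variable T : eqType.

Lemma count_cons (a : pred nat) x l : count a (x :: l) = (a x + count a l)%N.
Proof. by []. Qed.

Lemma count_setf (M : {fmap nat -> T}) k b (P : option T -> bool) :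
  k \notin domf M ->
  count (fun i => P M.[k <- b].[? i]) (domf M.[k <- b]) =
  (P (Some b) + count (fun i => P M.[? i]) (domf M))%N.
Proof.
move=> nin.
rewrite (@count_fsetE _ (k :: domf M)); last first.
- by move=> i; rewrite dom_setf !inE.
- by rewrite cons_uniq nin fset_uniq.
rewrite count_cons fnd_set eqxx; congr addn.
apply: eq_in_count => i iin; rewrite fnd_set; case: eqP => // ei.
by move: nin; rewrite -ei iin.
Qed.

Lemma cnt_mkmap N (s : seq T) B :
  count (fun i => (mkmap N s).[? i] == Some B) (domf (mkmap N s)) = count (pred1 B) s.
Proof.
elim: s N => [|b s IH] N; first by [].
change (mkmap N (b :: s)) with ((mkmap N.+1 s).[N.+1 <- b]).
have nin : N.+1 \notin domf (mkmap N.+1 s) by rewrite mkmap_dom ltnn.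
by rewrite (@count_setf _ _ _ (fun o => o == Some B)) // IH.
Qed.

Lemma mkmap_cat N (s s' : seq T) :
  mkmap N (s ++ s') = catf (mkmap N s) (mkmap (N + size s) s').
Proof.
apply/fmapP => i; rewrite fnd_cat mkmap_dom !mkmap_fnd map_cat nth_cat size_map.
case: (ltnP N i) => hi; last first.
  by have -> : (N + size s < i) = false by apply/negbTE; rewrite -leqNgt; lia.
case: (ltnP (i - N.+1) (size s)) => h1.
  by have -> : (N + size s < i) = false by apply/negbTE; rewrite -leqNgt; lia.
have -> : (N + size s < i) by lia.
have -> : i - N.+1 - size s = i - (N + size s).+1 by lia.
rewrite /=; case: ltnP => // h2.
by rewrite !nth_default ?size_map.
Qed.

Lemma mkmap_map N (s : seq T) (g : T -> T) i :
  (mkmap N (map g s)).[? i] = omap g (mkmap N s).[? i].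
Proof.
rewrite !mkmap_fnd; case: ifP => // _.
elim: s (i - N.+1) => [|b s IH] [|j] //=.
Qed.
End Mk2.

Local Notation pm := (@Defs.pmap _).
Section Prof.
Variable m : nat.
Hypothesis hm : 0 < m.
Variable f : profile m -> {set {set 'I_m}}.
Hypothesis fanon : anonymous f.

Lemma setT_neq0 : [set: 'I_m] != set0.
Proof. by rewrite -card_gt0 cardsT card_ord. Qed.

Definition bT : ballot m := exist _ [set: 'I_m] setT_neq0.

Definition nes (s : seq (ballot m)) := if s is [::] then [:: bT] else s.

Lemma nes_neq s : nes s != [::]. Proof. by case: s. Qed.
Lemma nesE s : s != [::] -> nes s = s. Proof. by case: s. Qed.

Lemma mk_valid N (s : seq (ballot m)) : s != [::] -> valid_profile (mkmap N s).
Proof.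
move=> sn; apply/andP; split.
  apply/negP => /eqP e.
  have : N.+1 \in domf (mkmap N s) by rewrite mkmap_dom ltnSn subnn lt0n size_eq0.
  by rewrite e.
by rewrite mkmap_dom.
Qed.

Definition mkprof N s : profile m := Profile (mk_valid N (nes_neq s)).

Lemma pmap_mkprof N s : s != [::] -> pm (mkprof N s) = mkmap N s.
Proof. by move=> sn; rewrite /= nesE. Qed.

Definition cnt (A : profile m) : {ffun ballot m -> nat} :=
  [ffun B => count (fun i => (pm A).[? i] == Some B) (domf (pm A))].

Definition seqA (A : profile m) : seq (ballot m) :=
  seq.pmap (fun i => (pm A).[? i]) (domf (pm A)).

Lemma seqA_map A : map Some (seqA A) = map (fun i => (pm A).[? i]) (domf (pm A)).
Proof.
rewrite pmapS_filter; congr map; apply/all_filterP/allP => i iin /=.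
by rewrite fndSome.
Qed.

Lemma size_seqA A : size (seqA A) = size (domf (pm A)).
Proof. by rewrite -(size_map Some) seqA_map size_map. Qed.

Lemma seqA_neq A : seqA A != [::].
Proof.
rewrite -size_eq0 size_seqA size_eq0; apply/negP => /eqP e.
have := pmap_valid A; rewrite /valid_profile => /andP[/fset0Pn [i ii] _].
by move: ii; rewrite -[i \in domf _]/(i \in (domf (pm A) : seq nat)) e.
Qed.

Lemma count_Some (s : seq (ballot m)) B :
  count_mem B s = count (pred1 (Some B)) (map Some s).
Proof. by rewrite count_map; apply: eq_count => x /=. Qed.

Lemma cnt_seqA A B : cnt A B = count_mem B (seqA A).
Proof. by rewrite ffunE count_Some seqA_map count_map. Qed.

Lemma cnt_mkprof N s B : s != [::] -> cnt (mkprof N s) B = count_mem B s.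
Proof. by move=> sn; rewrite ffunE pmap_mkprof // cnt_mkmap. Qed.

Lemma nthSome (s : seq (ballot m)) j : j < size s ->
  nth None (map Some s) j = Some (nth bT s j).
Proof. by move=> h; rewrite (nth_map bT). Qed.

Lemma anon_mk A : f (mkprof 0 (seqA A)) = f A.
Proof.
set d : seq nat := domf (pm A).
have ud : uniq d := fset_uniq _.
have sn := seqA_neq A.
apply: (fanon (pi := fun i => nth 0 d (i - 1))); rewrite ?pmap_mkprof //.
- intros i j; rewrite !mkmap_dom size_seqA => /andP[i0 ii] /andP[j0 jj] e.
  move/eqP: e; rewrite nth_uniq // => /eqP e. lia.
- move=> i; rewrite mkmap_dom size_seqA => /andP[_ ii]; exact: (mem_nth 0 ii).
- move=> j jd; exists (index j d).+1.
    by rewrite mkmap_dom size_seqA subSS subn0 index_mem.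
  by rewrite subn1 /= nth_index.
- move=> i; rewrite mkmap_dom size_seqA => /andP[i0 ii].
  by rewrite mkmap_fnd i0 seqA_map (nth_map 0).
Qed.

Lemma anon_perm s t : s != [::] -> perm_eq s t -> f (mkprof 0 s) = f (mkprof 0 t).
Proof.
move=> sn pst.
have tn : t != [::] by rewrite -size_eq0 -(perm_size pst) size_eq0.
have [Is pI sE] := perm_iotaP bT pst.
have uI : uniq Is by rewrite (perm_uniq pI) iota_uniq.
have szI : size Is = size t by rewrite (perm_size pI) size_iota.
have ltI j : j < size Is -> nth 0 Is j < size t.
  by move=> h; have := mem_nth 0 h; rewrite (perm_mem pI) mem_iota.
have szs : size s = size t by rewrite sE size_map.
apply: (fanon (pi := fun i => (nth 0 Is (i - 1)).+1)); rewrite ?pmap_mkprof //.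
- intros i j; rewrite !mkmap_dom szs => /andP[i0 ii] /andP[j0 jj] [e].
  move/eqP: e; rewrite nth_uniq ?szI // !subn1 => /eqP e.
  by rewrite -(prednK i0) -(prednK j0) e.
- move=> i; rewrite !mkmap_dom szs => /andP[i0 ii] /=.
  by rewrite subSS subn0 ltI ?szI.
- move=> j; rewrite mkmap_dom => /andP[j0 jj].
  have : j - 1 \in Is by rewrite (perm_mem pI) mem_iota.
  move=> jI; exists (index (j - 1) Is).+1.
    by rewrite mkmap_dom subSS subn0 szs -szI index_mem.
  by rewrite subSS subn0 nth_index // subn1 prednK.
- move=> i; rewrite mkmap_dom szs => /andP[i0 ii].
  rewrite !mkmap_fnd i0 /= subSS subn0 nthSome ?szs // nthSome ?ltI ?szI //.
  by rewrite sE (nth_map 0) ?szI.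
Qed.

Lemma anon_cnt A A' : (forall B, cnt A B = cnt A' B) -> f A = f A'.
Proof.
move=> h; rewrite -anon_mk -(anon_mk A'); apply: anon_perm; first exact: seqA_neq.
by apply/allP => x _; rewrite /= -!cnt_seqA h.
Qed.
End Prof.

Section GN.
Variable m : nat.
Hypothesis hm : 0 < m.
Variable k : nat.
Variable f : profile m -> {set {set 'I_m}}.
Hypothesis fanon : anonymous f.
Hypothesis fneut : neutral f.
Hypothesis fcons : consistent f.
Hypothesis fabc : is_ABC_rule k f.

Definition sq (u : {ffun ballot m -> nat}) : seq (ballot m) :=
  flatten [seq nseq (u B) B | B <- enum {: ballot m}].

Lemma count_sq u B : count_mem B (sq u) = u B.
Proof.
rewrite count_flatten -map_comp sumnE big_map big_enum /=.
rewrite (bigD1 B) //= count_nseq /= eqxx mul1n big1 ?addn0 // => B' nB.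
by rewrite count_nseq /= (negbTE nB).
Qed.

Lemma sq_neq (u : {ffun ballot m -> nat}) (B : ballot m) : 0 < u B -> sq u != [::].
Proof. by rewrite -count_sq; case: (sq u). Qed.

Definition gN u := f (mkprof hm 0 (sq u)).

Lemma cnt_pos (A : profile m) : exists B, 0 < cnt A B.
Proof.
have := seqA_neq A; case e: (seqA A) => [|B s] // _.
by exists B; rewrite cnt_seqA e /= eqxx.
Qed.

Lemma gN_prof (u : {ffun ballot m -> nat}) (A : profile m) : (forall B, cnt A B = u B) -> gN u = f A.
Proof.
move=> h; have [B hB] := cnt_pos A.
have sn : sq u != [::] by apply: (@sq_neq _ B); rewrite -h.
by apply: (anon_cnt hm fanon) => B'; rewrite cnt_mkprof // count_sq h.
Qed.

Definition addv (u u' : {ffun ballot m -> nat}) : {ffun ballot m -> nat} :=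
  [ffun B => (u B + u' B)%N].

Lemma gN_add (u u' : {ffun ballot m -> nat}) (B B' : ballot m) : 0 < u B -> 0 < u' B' ->
  gN u :&: gN u' != set0 -> gN (addv u u') = gN u :&: gN u'.
Proof.
move=> hu hu' ne.
have sn := sq_neq hu; have sn' := sq_neq hu'.
have sn2 : sq u ++ sq u' != [::] by case: (sq u) sn.
set A := mkprof hm 0 (sq u); set A' := mkprof hm (size (sq u)) (sq u').
set U := mkprof hm 0 (sq u ++ sq u').
have e' : gN u' = f A'.
  by apply: gN_prof => b; rewrite cnt_mkprof // count_sq.
have eU : gN (addv u u') = f U.
  by apply: gN_prof => b; rewrite cnt_mkprof // count_cat !count_sq ffunE.
rewrite eU e' /gN -/A; apply: fcons; last by rewrite -e'.
split; last by rewrite !pmap_mkprof // mkmap_cat.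
apply/fdisjointP => i; rewrite !pmap_mkprof // !mkmap_dom.
move=> /andP[_ h]; apply/negP => /andP[h2 _]; move: h h2; rewrite subn1.
by case: i => //= i h h2; rewrite ltnS leqNgt h in h2.
Qed.

Lemma bpermK (t : {perm 'I_m}) (B : ballot m) : bperm t^-1 (bperm t B) = B.
Proof.
apply: val_inj => /=; rewrite -imset_comp (eq_imset _ (permK t)).
exact: imset_id.
Qed.

Lemma bpermKV (t : {perm 'I_m}) (B : ballot m) : bperm t (bperm t^-1 B) = B.
Proof. by rewrite -{1}(invgK t) bpermK. Qed.

Lemma bperm_eq (t : {perm 'I_m}) (x B : ballot m) :
  (bperm t x == B) = (x == bperm t^-1 B).
Proof. by apply/eqP/eqP => [<-|->]; rewrite ?bpermK ?bpermKV. Qed.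

Definition permv (t : {perm 'I_m}) (u : {ffun ballot m -> nat}) : {ffun ballot m -> nat} :=
  [ffun B => u (bperm t^-1 B)].

Lemma gN_perm (u : {ffun ballot m -> nat}) (B0 : ballot m) (t : {perm 'I_m}) :
  0 < u B0 -> gN (permv t u) = [set t @: W | W : {set 'I_m} in gN u].
Proof.
move=> h0; have sn := sq_neq h0.
have tn : map (bperm t) (sq u) != [::] by case: (sq u) sn.
set tA := mkprof hm 0 (map (bperm t) (sq u)).
have -> : gN (permv t u) = f tA.
  apply: gN_prof => B; rewrite cnt_mkprof // count_map ffunE -count_sq.
  by apply: eq_count => x /=; rewrite bperm_eq.
apply: fneut; split.
  by apply/fsetP => i; rewrite -!fndSome !pmap_mkprof // mkmap_map; case: (_.[? i]).
by move=> i; rewrite !pmap_mkprof // mkmap_map.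
Qed.

Lemma mem_tperm_imset (x y z : 'I_m) (A : {set 'I_m}) :
  (z \in tperm x y @: A) = (tperm x y z \in A).
Proof.
apply/imsetP/idP => [[a aA ->]|h]; first by rewrite tpermK.
by exists (tperm x y z); rewrite ?tpermK.
Qed.

Lemma trans_k (X : {set {set 'I_m}}) :
  (forall t : {perm 'I_m}, X = [set t @: W | W : {set 'I_m} in X]) ->
  forall W0 W : {set 'I_m}, W0 \in X -> #|W| = #|W0| -> W \in X.
Proof.
move=> hX W0 W.
have step : forall (t : {perm 'I_m}) V, V \in X -> t @: V \in X.
  by move=> t V hV; rewrite (hX t); apply: imset_f.
have [n hn] : exists n, #|W0 :\: W| = n by exists #|W0 :\: W|.
elim: n W0 hn => [|n IH] W0 hn h0 hc.
  have sub : W0 \subset W by rewrite -setD_eq0 -cards_eq0 hn.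
  have e : W0 == W by rewrite eqEcard sub hc leqnn.
  by rewrite -(eqP e).
have [x hx] : exists x, x \in W0 :\: W by apply/set0Pn; rewrite -card_gt0 hn.
have hc2 : #|W :\: W0| = n.+1.
  have h1 := cardsID W0 W; have h2 := cardsID W W0; rewrite setIC in h2.
  by rewrite -hn; apply/eqP; rewrite -(eqn_add2l #|W :&: W0|) h1 h2 hc.
have [y hy] : exists y, y \in W :\: W0 by apply/set0Pn; rewrite -card_gt0 hc2.
move: hx hy; rewrite !inE => /andP[xW xW0] /andP[yW0 yW].
apply: (IH (tperm x y @: W0)); last 2 first.
- exact: step _ _ h0.
- rewrite card_imset; [exact: hc | exact: perm_inj].
have -> : tperm x y @: W0 :\: W = (W0 :\: W) :\ x.
  apply/setP => z; rewrite !inE mem_tperm_imset.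
  case: tpermP => [->|->|/eqP nx /eqP ny].
  - by rewrite eqxx (negbTE yW0) andbF.
  - by case: (y \in W) yW => [_|//]; rewrite /= andbF.
  - by rewrite nx.
have := cardsD1 x (W0 :\: W); rewrite hn !inE xW xW0 /= add1n; by case.
Qed.

Definition Wk := [set W : {set 'I_m} | #|W| == k].
Definition cv (c : nat) : {ffun ballot m -> nat} := [ffun _ => c].

Lemma gN_sub (u : {ffun ballot m -> nat}) : gN u \subset Wk /\ gN u != set0.
Proof.
have [ne hW] := fabc (mkprof hm 0 (sq u)); split => //.
by apply/subsetP => W /hW; rewrite inE => ->.
Qed.

Lemma gN_top c : 0 < c -> gN (cv c) = Wk.
Proof.
move=> c0; apply/eqP; rewrite eqEsubset (proj1 (gN_sub _)) /=.
have hX : forall t : {perm 'I_m}, gN (cv c) = [set t @: W | W : {set 'I_m} in gN (cv c)].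
  move=> t; rewrite -(@gN_perm _ (bT hm)) ?ffunE //; congr gN.
  by apply/ffunP => B; rewrite !ffunE.
have [W0 h0] := set0Pn _ (proj2 (gN_sub (cv c))).
have := proj1 (gN_sub (cv c)) => /subsetP /(_ _ h0); rewrite inE => /eqP hW0.
apply/subsetP => W; rewrite inE => /eqP hW.
by apply: (trans_k hX h0); rewrite hW hW0.
Qed.

Lemma gN_shift (u : {ffun ballot m -> nat}) (B0 : ballot m) c :
  0 < u B0 -> 0 < c -> gN (addv u (cv c)) = gN u.
Proof.
move=> h0 c0; have [sub ne] := gN_sub u.
have e : gN u :&: gN (cv c) = gN u by rewrite gN_top //; apply/setIidPl.
rewrite (@gN_add _ _ B0 B0) ?e ?ffunE //.
Qed.

Definition scalev (a : nat) (u : {ffun ballot m -> nat}) : {ffun ballot m -> nat} :=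
  [ffun B => a * u B].

Lemma gN_scale (u : {ffun ballot m -> nat}) (B0 : ballot m) a :
  0 < u B0 -> 0 < a -> gN (scalev a u) = gN u.
Proof.
move=> h0; case: a => // a _; elim: a => [|a IH].
  by congr gN; apply/ffunP => B; rewrite ffunE mul1n.
have -> : scalev a.+2 u = addv (scalev a.+1 u) u.
  by apply/ffunP => B; rewrite !ffunE mulSn addnC.
by rewrite (@gN_add _ _ B0 B0) ?IH ?setIid ?(proj2 (gN_sub u)) // ffunE muln_gt0 h0.
Qed.
End GN.


Section Rat.
Variable m : nat.
Hypothesis hm : 0 < m.
Variable k : nat.
Variable f : profile m -> {set {set 'I_m}}.
Hypothesis fanon : anonymous f.
Hypothesis fneut : neutral f.
Hypothesis fcons : consistent f.
Hypothesis fabc : is_ABC_rule k f.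

Local Open Scope ring_scope.

Definition rep (v : qvec m) (d c : nat) (u : {ffun ballot m -> nat}) :=
  [/\ (0 < d)%N, (0 < c)%N, (forall B, 0 < u B)%N &
      (forall B, (u B)%:R = d%:R * v B + c%:R :> rat)].

Local Notation gN := (gN hm f).
Let gscale := gN_scale hm fanon fcons fabc.
Let gshift := gN_shift hm fanon fneut fcons fabc.
Let gperm := gN_perm hm fanon fneut.
Let gprof := gN_prof hm fanon.
Let gadd := @gN_add m hm f fanon fcons.
Let gsub := gN_sub hm fabc.

Lemma rep_uniq v d1 c1 u1 d2 c2 u2 :
  rep v d1 c1 u1 -> rep v d2 c2 u2 -> gN u1 = gN u2.
Proof.
move=> [d10 c10 p1 e1] [d20 c20 p2 e2].
have e : addv (scalev d2 u1) (cv m (d1 * c2)) = addv (scalev d1 u2) (cv m (d2 * c1)).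
  apply/ffunP => B; rewrite !ffunE; apply/eqP; rewrite -(eqr_nat rat).
  by rewrite !natrD !natrM e1 e2; apply/eqP; ring.
rewrite -(@gscale _ (bT hm) d2) //.
rewrite -(@gshift _ (bT hm) (d1 * c2)) ?ffunE ?muln_gt0 ?d10 ?p1 //.
rewrite e (@gshift _ (bT hm)) ?ffunE ?muln_gt0 ?d10 ?p2 //.
rewrite (@gscale _ (bT hm)) //.
all: by rewrite ?d10 ?d20 ?c10 ?c20 ?p1 ?p2 ?muln_gt0.
Qed.

Lemma rep_ex v : exists d c u, rep v d c u.
Proof.
pose D : int := \prod_B denq (v B).
have D0 : 0 < D by apply: prodr_gt0 => B _; exact: denq_gt0.
pose z B : int := (\prod_(B' | B' != B) denq (v B')) * numq (v B).
have ez B : (z B)%:~R = D%:~R * v B :> rat.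
  rewrite /z /D intrM numqE [X in _ = X%:~R * _](bigD1 B) //= intrM; ring.
pose S := (\sum_B `|z B|%N)%N.
have hS B : (`|z B|%N <= S)%N by rewrite /S (bigD1 B) //= leq_addr.
exists `|D|%N, S.+1, [ffun B => absz (z B + (S.+1)%:Z)]; split => //.
- by rewrite absz_gt0 lt0r_neq0.
- move=> B; rewrite ffunE absz_gt0; have := hS B; apply: contraTN => /eqP h; lia.
- move=> B; rewrite ffunE natr_absz ger0_norm; last by have := hS B; lia.
  by rewrite intrD ez natr_absz gtr0_norm.
Qed.

Definition gq (v : qvec m) : {set {set 'I_m}} :=
  epsilon (inhabits set0) (fun X => exists d c u, rep v d c u /\ X = gN u).

Lemma gq_rep v d c u : rep v d c u -> gq v = gN u.
Proof.
move=> r.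
have : exists X, exists d c u, rep v d c u /\ X = gN u.
  by have [d' [c' [u' r']]] := rep_ex v; exists (gN u'), d', c', u'.
rewrite /gq; move=> /(epsilon_spec (inhabits set0)) [d' [c' [u' [r' ->]]]].
exact: rep_uniq r' r.
Qed.

Lemma gq_abc v : abc_rule_out k (gq v).
Proof. by have [d [c [u r]]] := rep_ex v; rewrite (gq_rep r); apply: fabc. Qed.

Lemma gq_perm (t : {perm 'I_m}) v :
  gq (vperm t v) = [set t @: W | W : {set 'I_m} in gq v].
Proof.
have [d [c [u r]]] := rep_ex v; rewrite (gq_rep r).
have [d0 c0 p e] := r.
rewrite (@gq_rep _ d c (permv t u)); first by rewrite (@gperm _ (bT hm)).
by split => // B; rewrite !ffunE.
Qed.

Lemma gq_cons v v' : gq v :&: gq v' != set0 -> gq (vadd v v') = gq v :&: gq v'.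
Proof.
have [d [c [u r]]] := rep_ex v; have [d' [c' [u' r']]] := rep_ex v'.
rewrite (gq_rep r) (gq_rep r') => ne.
have [d0 c0 p e] := r; have [d0' c0' p' e'] := r'.
rewrite (@gq_rep _ (d * d') (c * d' + c' * d) (addv (scalev d' u) (scalev d u'))); last first.
  split; rewrite ?muln_gt0 ?addn_gt0 ?muln_gt0 ?d0 ?c0 ?d0' ?c0' //.
    by move=> B; rewrite !ffunE addn_gt0 muln_gt0 d0' p.
  move=> B; rewrite !ffunE !natrD !natrM e e'; ring.
rewrite (@gadd _ _ (bT hm) (bT hm)) ?ffunE ?muln_gt0 ?d0 ?d0' ?p ?p' //.
  by rewrite (@gscale _ (bT hm)) // (@gscale _ (bT hm)).
by rewrite (@gscale _ (bT hm)) // (@gscale _ (bT hm)).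
Qed.

Lemma gq_count (A : profile m) : gq (count_vec A) = f A.
Proof.
have [B0 h0] := cnt_pos A.
rewrite (@gq_rep _ 1 1 (addv (cnt A) (cv m 1))); last first.
  split => // B; rewrite !ffunE; [by rewrite addn1 | by rewrite natrD mul1r].
transitivity (gN (cnt A)); first exact: (@gshift _ B0 1 h0 isT).
exact: gprof.
Qed.
End Rat.

End Aux.
Unset Implicit Arguments. Set Strict Implicit.

Theorem mainTheorem7 (m k : nat) (f : profile m -> {set {set 'I_m}}) :
  2 <= m -> 1 <= k <= m.-1 ->
  is_ABC_rule k f -> non_imposing k f ->
  anonymous f -> neutral f -> consistent f ->
  exists g : qvec m -> {set {set 'I_m}},
    (forall v, abc_rule_out k (g v)) /\
    (forall (t : {perm 'I_m}) (v : qvec m),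
        g (vperm t v) = ([set t @: W | W : {set 'I_m} in g v])%SET) /\
    (forall v v' : qvec m, g v :&: g v' != set0 ->
        g (vadd v v') = g v :&: g v') /\
    (forall A : profile m, g (count_vec A) = f A).
Proof.
move=> m2 _ fabc _ fanon fneut fcons.
have hm : 0 < m by apply: leq_trans m2.
exists (Aux.gq hm f); split; [|split; [|split]].
- exact: Aux.gq_abc.
- exact: Aux.gq_perm.
- exact: Aux.gq_cons.
- exact: Aux.gq_count.
Qed.
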